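(* Let $n\ge 27$ and let $\mathcal{X},\mathcal{Y}$ be finite alphabets with $|\mathcal{X}|,|\mathcal{Y}|\ge 2$. For any real $\epsilon\in\left(\frac{4|\mathcal{X}||\mathcal{Y}|}{n}\log_2 n,1\right)$ there exists a subset $\tilde{\mathcal{P}}\subseteq\mathcal{P}(\mathcal{Y}|\mathcal{X})$ with $$|\tilde{\mathcal{P}}|\le\left(|\mathcal{Y}|\left(1+\left\lfloor\frac{4|\mathcal{Y}|^2}{\epsilon}\right\rfloor\right)\right)^{|\mathcal{X}||\mathcal{Y}|}$$ with the following property. Let $M$ be a discrete random variable, $\mathbf{X}$ a random vector on $\mathcal{X}^n$, and $(\mathbf{Y}_w)_{w\in\mathcal{P}(\mathcal{Y}|\mathcal{X})}$ random vectors on $\mathcal{Y}^n$ such that $M,\mathbf{X},(\mathbf{Y}_w)_w$ form a Markov chain in that order and $\mathbf{Y}_w$ given $\mathbf{X}$ is distributed according to $w^n(\mathbf{y}|\mathbf{x})=\prod_{t=1}^n w(y_t|x_t)$. Then for each $w\in\mathcal{P}(\mathcal{Y}|\mathcal{X})$ there exists $\tilde w_w\in\tilde{\mathcal{P}}$ such that if $$\Pr\left(|h(\mathbf{Y}_{\tilde w_w}|M)-\mathbb{H}(\mathbf{Y}_{\tilde w_w}|M)|>n\delta\right)<2^{-n\alpha}$$ for some $\delta,\alpha>0$, then $$\Pr\left(|h(\mathbf{Y}_w|M)-\mathbb{H}(\mathbf{Y}_w|M)|>n\tilde\delta\right)<2^{-n\epsilon}+2^{-n(\alpha-\epsilon)},$$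 where $$\tilde\delta=(2+2^{-n\epsilon}+2^{-n(\alpha-\epsilon)})(\delta+\epsilon)+(2^{-n\epsilon}+2^{-n(\alpha-\epsilon)})\left[\log_2|\mathcal{Y}|-\frac2n\log_2(2^{-n\epsilon}+2^{-n(\alpha-\epsilon)})\right].$$
   Context: $\mathcal{P}(\mathcal{Y}|\mathcal{X})$ is the set of all conditional distributions $w(y|x)$, $y\in\mathcal{Y}$, $x\in\mathcal{X}$. $h(\mathbf{Y}_w|M)$ denotes the random variable $-\log_2 p_{\mathbf{Y}_w|M}(\mathbf{Y}_w|M)$ and $\mathbb{H}(\mathbf{Y}_w|M)$ the conditional entropy. *)

(* Defs.v *)
From HB Require Import structures.
From mathcomp Require Import all_boot all_order all_algebra.
From mathcomp Require Import all_classical all_reals all_analysis.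
Set Implicit Arguments. Unset Strict Implicit. Unset Printing Implicit Defensive.
Import Order.TTheory GRing.Theory Num.Theory.
Local Open Scope classical_set_scope.
Local Open Scope ring_scope.

Section Defs.
Variable R : realType.

Definition log2 (x : R) : R := ln x / ln 2.
Definition pow2 (x : R) : R := powR 2 x.

Variables (X Y : finType) (n : nat).

Definition is_channel (w : X -> Y -> R) : Prop :=
  (forall x y, 0 <= w x y) /\ (forall x, \sum_(y : Y) w x y = 1).

Definition chan_n (w : X -> Y -> R) (x : {ffun 'I_n -> X})
  (y : {ffun 'I_n -> Y}) : R := \prod_(t < n) w (x t) (y t).

Variable (TM : countType).

Definition is_joint_pmf (p : TM -> {ffun 'I_n -> X} -> R) : Prop :=
  (forall m x, 0 <= p m x) /\
  (\esum_(mx in [set: TM * {ffun 'I_n -> X}]) (p mx.1 mx.2)%:E = 1%E).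

Variable (p : TM -> {ffun 'I_n -> X} -> R) (w : X -> Y -> R).

(* joint pmf of (M, Y_w) for the Markov chain M - X - Y_w with Y_w|X ~ w^n *)
Definition pMY (m : TM) (y : {ffun 'I_n -> Y}) : R :=
  \sum_(x : {ffun 'I_n -> X}) p m x * chan_n w x y.

Definition pM (m : TM) : R := \sum_(x : {ffun 'I_n -> X}) p m x.

Definition cond_info (m : TM) (y : {ffun 'I_n -> Y}) : R :=
  - log2 (pMY m y / pM m).

Definition cond_entropy : \bar R :=
  \esum_(my in [set: TM * {ffun 'I_n -> Y}])
     (pMY my.1 my.2 * cond_info my.1 my.2)%:E.

Definition prob_dev (t : R) : \bar R :=
  \esum_(my in [set my : TM * {ffun 'I_n -> Y} |
            (`| (cond_info my.1 my.2)%:E - cond_entropy | > t%:E)%E])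
     (pMY my.1 my.2)%:E.

End Defs.

(* Main.v *)
From HB Require Import structures.
From mathcomp Require Import all_boot all_order all_algebra.
From mathcomp Require Import all_classical all_reals all_analysis.
Require Import Defs.
From mathcomp Require Import ring lra.
Set Implicit Arguments. Unset Strict Implicit. Unset Printing Implicit Defensive.
Import Order.TTheory GRing.Theory Num.Theory.
Local Open Scope classical_set_scope.
Local Open Scope ring_scope.

Section Gen.
Variable R : realType.

Lemma esumZ (T : choiceType) (S : set T) (c : R) (f : T -> \bar R) :
  0 <= c -> (forall i, (0 <= f i)%E) ->
  \esum_(i in S) (c%:E * f i)%E = (c%:E * \esum_(i in S) f i)%E.
Proof.
move=> c0 f0; rewrite /esum -ereal_supZl //; last first.
  by apply/set0P; exists 0%E; exists set0; [exact: fsets_set0|rewrite fsbig_set0].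
congr ereal_sup; apply/seteqP; split => x.
  case=> A hA <-; exists (\sum_(i \in A) f i)%E; first by exists A.
  by rewrite ge0_mule_fsumr.
case=> y [A hA <-] <-; exists A => //; by rewrite ge0_mule_fsumr.
Qed.

Lemma esum_sub (T : choiceType) (S1 S2 : set T) (f : T -> \bar R) :
  S1 `<=` S2 -> (forall i, (0 <= f i)%E) ->
  (\esum_(i in S1) f i <= \esum_(i in S2) f i)%E.
Proof.
move=> sub f0; rewrite esum_mkcond [X in (_ <= X)%E]esum_mkcond.
apply: le_esum => i _; case: ifPn => h1; last by case: ifP.
by rewrite ifT //; move: h1; rewrite !inE; apply: sub.
Qed.

Lemma esum_union3 (T : choiceType) (S A B C : set T) (f : T -> \bar R) :
  S `<=` A `|` B `|` C -> (forall i, (0 <= f i)%E) ->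
  (\esum_(i in S) f i <= \esum_(i in A) f i + \esum_(i in B) f i + \esum_(i in C) f i)%E.
Proof.
move=> sub f0; rewrite (esum_mkcond S) (esum_mkcond A) (esum_mkcond B) (esum_mkcond C).
have g0 (D : set T) i : (0 <= if i \in D then f i else 0)%E by case: ifP.
rewrite -!esumD //; last by move=> i _; rewrite adde_ge0.
apply: le_esum => i _; case: ifPn => hS; last by rewrite !adde_ge0.
move: hS; rewrite inE => /sub [[hA|hB]|hC].
- by rewrite (mem_set hA) -addeA; apply: leeDl; rewrite adde_ge0.
- by rewrite (mem_set hB) -addeA; apply: lee_paddl => //; apply: leeDl.
- by rewrite (mem_set hC); apply: lee_paddl => //; rewrite adde_ge0.
Qed.

Lemma fsum_setT (F : finType) (f : F -> R) :
  \sum_(i \in [set: F]) f i = \sum_(i : F) f i.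
Proof.
rewrite (fsbigE (enum F)) ?enum_uniq //.
  by rewrite big_enum_cond /=; apply: eq_bigl => i; rewrite in_setT.
by move=> i _; rewrite mem_enum.
Qed.

Lemma esum_pair (T : choiceType) (F : finType) (f : T -> F -> R) :
  (forall m y, 0 <= f m y) ->
  \esum_(i in [set: T * F]) (f i.1 i.2)%:E = \esum_(m in [set: T]) (\sum_(y : F) f m y)%:E.
Proof.
move=> f0.
have -> : [set: T * F] = [set: T] `*`` (fun _ => [set: F]).
  by apply/seteqP; split => x.
rewrite -(@esum_esum _ _ _ _ _ (fun m y => (f m y)%:E)); last by move=> i j _ _; rewrite lee_fin.
apply: eq_esum => m _; rewrite esum_fset; [|exact: finite_finset|by move=> i _; rewrite lee_fin].
rewrite fsumEFin; last exact: finite_finset.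
congr EFin; exact: (fsum_setT (f m)).
Qed.

Lemma fin_of (x : \bar R) (c : R) : (0 <= x)%E -> (x <= c%:E)%E -> x = (fine x)%:E.
Proof. by move=> x0 xc; rewrite fineK // ge0_fin_numE // (le_lt_trans xc (ltry c)). Qed.

Lemma ln_le_sub1 (x : R) : 0 < x -> ln x <= x - 1.
Proof. by move=> x0; have := expR_ge1Dx (ln x); rewrite lnK ?posrE // lerBrDl. Qed.

Lemma ln2_gt0 : 0 < ln (2 : R).
Proof. by apply: ln_gt0; rewrite ltr1n. Qed.

End Gen.

Section Model.
Variables (R : realType) (X Y : finType) (n : nat) (TM : countType).
Variable p : TM -> {ffun 'I_n -> X} -> R.
Hypothesis hp : is_joint_pmf p.
Local Notation F := {ffun 'I_n -> Y}.
Local Notation FX := {ffun 'I_n -> X}.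

Lemma p_ge0 m x : 0 <= p m x. Proof. by case: hp. Qed.
Lemma pM_ge0 m : 0 <= pM p m. Proof. by apply: sumr_ge0 => x _; exact: p_ge0. Qed.

Lemma pM_mass : \esum_(m in [set: TM]) (pM p m)%:E = 1%E.
Proof. by case: hp => _; rewrite (esum_pair p_ge0). Qed.

Section Chan.
Variable w : X -> Y -> R.
Hypothesis hw : is_channel w.

Lemma w_le1 x y : w x y <= 1.
Proof.
case: hw => w0 w1; rewrite -(w1 x) (bigD1 y) //= lerDl.
by apply: sumr_ge0 => ? _.
Qed.

Lemma chan_ge0 (x : FX) (y : F) : 0 <= chan_n w x y.
Proof. by case: hw => w0 _; apply: prodr_ge0 => t _. Qed.

Lemma chan_le1 (x : FX) (y : F) : chan_n w x y <= 1.
Proof. by apply: prodr_ile1 => t _; rewrite w_le1 andbT; case: hw. Qed.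

Lemma chan_sum (x : FX) : \sum_(y : F) chan_n w x y = 1.
Proof.
rewrite /chan_n -(bigA_distr_bigA (fun t j => w (x t) j)) /=.
by apply: big1 => t _; case: hw.
Qed.

Lemma pMY_ge0 m (y : F) : 0 <= pMY p w m y.
Proof. by apply: sumr_ge0 => x _; rewrite mulr_ge0 ?p_ge0 ?chan_ge0. Qed.

Lemma pMY_le m (y : F) : pMY p w m y <= pM p m.
Proof. by apply: ler_sum => x _; rewrite ler_piMr ?p_ge0 ?chan_le1. Qed.

Lemma pMY_sum m : \sum_(y : F) pMY p w m y = pM p m.
Proof.
rewrite /pMY exchange_big; apply: eq_bigr => x _.
by rewrite -mulr_sumr chan_sum mulr1.
Qed.

Lemma mass : \esum_(i in [set: TM * F]) (pMY p w i.1 i.2)%:E = 1%E.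
Proof.
rewrite (esum_pair pMY_ge0) -pM_mass; apply: eq_esum => m _.
by rewrite pMY_sum.
Qed.

Lemma cond_info_ge0 m (y : F) : 0 <= cond_info p w m y.
Proof.
rewrite /cond_info /log2 oppr_ge0 pmulr_lle0 ?invr_gt0 ?ln2_gt0 //.
apply: ln_le0; have [->|hM] := eqVneq (pM p m) 0; first by rewrite invr0 mulr0.
rewrite ler_pdivrMr ?mul1r ?pMY_le //.
by rewrite lt_neqAle eq_sym hM pM_ge0.
Qed.

End Chan.

Definition NY : R := (#|F|)%:R.

Lemma NY_mass : \esum_(i in [set: TM * F]) (pM p i.1)%:E = NY%:E.
Proof.
rewrite (esum_pair (fun m (y : F) => pM_ge0 m)).
under eq_esum do rewrite sumr_const -mulr_natl EFinM.
by rewrite esumZ ?pM_mass ?mule1 // => i; rewrite lee_fin pM_ge0.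
Qed.

Section Chan2.
Variable w : X -> Y -> R.
Hypothesis hw : is_channel w.
Hypothesis NY1 : 1 <= NY.
Let NY0 : 0 < NY. Proof. exact: lt_le_trans ltr01 NY1. Qed.

Lemma logsum_pt r m (y : F) : 0 < r ->
  pMY p w m y * cond_info p w m y + pMY p w m y / ln 2 <=
  pMY p w m y * log2 (NY / r) + r / NY * pM p m / ln 2.
Proof.
move=> r0; have L0 := ln2_gt0 R.
have := pMY_ge0 hw m y; rewrite le_eqVlt => /orP[/eqP P0|Ppos].
  rewrite -P0 !mul0r !add0r; apply: divr_ge0; last exact: ltW L0.
  by rewrite mulr_ge0 ?divr_ge0 ?pM_ge0 ?(ltW r0) ?(ltW NY0).
have Mpos : 0 < pM p m by apply: lt_le_trans Ppos (pMY_le hw m y).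
set P := pMY p w m y in Ppos *; set M := pM p m in Mpos *.
have u0 : 0 < M * r / (P * NY) by rewrite divr_gt0 ?mulr_gt0.
have key := ln_le_sub1 u0.
rewrite ln_div ?posrE ?mulr_gt0 // !lnM ?posrE // in key.
rewrite /cond_info /log2 ln_div ?posrE // ln_div ?posrE //.
rewrite -subr_ge0 -/P -/M.
have -> : P * ((ln NY - ln r) / ln 2) + r / NY * M / ln 2 - (P * - ((ln P - ln M) / ln 2) + P / ln 2)
  = (P * (M * r / (P * NY) - 1) - P * (ln M + ln r - (ln P + ln NY))) / ln 2.
  field.
  by rewrite !gt_eqF.
apply: divr_ge0; last exact: ltW L0.
by rewrite subr_ge0 ler_pM2l.
Qed.

Lemma Pfin (E : set (TM * F)) :
  \esum_(i in E) (pMY p w i.1 i.2)%:E = (fine (\esum_(i in E) (pMY p w i.1 i.2)%:E))%:E.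
Proof.
apply: (@fin_of _ _ 1); first by apply: esum_ge0 => i _; rewrite lee_fin pMY_ge0.
rewrite -(mass hw); apply: esum_sub => // i; by rewrite lee_fin pMY_ge0.
Qed.

Lemma Pfin_bnd (E : set (TM * F)) :
  0 <= fine (\esum_(i in E) (pMY p w i.1 i.2)%:E) <= 1.
Proof.
rewrite -!lee_fin -Pfin; apply/andP; split.
  by apply: esum_ge0 => i _; rewrite lee_fin pMY_ge0.
rewrite -(mass hw); apply: esum_sub => // i; by rewrite lee_fin pMY_ge0.
Qed.

Lemma logsum (E : set (TM * F)) r : 0 < r -> r <= NY ->
  (\esum_(i in E) (pMY p w i.1 i.2 * cond_info p w i.1 i.2)%:E <=
   (fine (\esum_(i in E) (pMY p w i.1 i.2)%:E) * log2 (NY / r)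
    + (r - fine (\esum_(i in E) (pMY p w i.1 i.2)%:E)) / ln 2)%:E)%E.
Proof.
move=> r0 rN; set q := fine _.
have L0 := ln2_gt0 R.
have Pf : \esum_(i in E) (pMY p w i.1 i.2)%:E = q%:E by exact: Pfin.
have lg0 : 0 <= log2 (NY / r).
  by rewrite /log2 divr_ge0 ?(ltW L0) // ln_ge0 // ler_pdivlMr // mul1r.
set S := \esum_(i in E) _.
have S0 : (0 <= S)%E.
  by apply: esum_ge0 => i _; rewrite lee_fin mulr_ge0 ?pMY_ge0 ?cond_info_ge0.
have h1 : (S + \esum_(i in E) (pMY p w i.1 i.2 / ln 2)%:E <=
   \esum_(i in E) (log2 (NY / r) * pMY p w i.1 i.2)%:E +
   \esum_(i in E) (r / NY / ln 2 * pM p i.1)%:E)%E.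
  rewrite /S -!esumD.
  - apply: le_esum => i _; rewrite -!EFinD lee_fin.
    by rewrite (mulrC (log2 _)) mulrAC logsum_pt.
  - by move=> i _; rewrite lee_fin mulr_ge0 ?pMY_ge0.
  - by move=> i _; rewrite lee_fin !mulr_ge0 ?divr_ge0 ?pM_ge0 ?invr_ge0 ?(ltW L0) ?(ltW r0) ?(ltW NY0).
  - by move=> i _; rewrite lee_fin mulr_ge0 ?pMY_ge0 ?cond_info_ge0.
  - by move=> i _; rewrite lee_fin divr_ge0 ?pMY_ge0 ?(ltW L0).
have e1 : \esum_(i in E) (pMY p w i.1 i.2 / ln 2)%:E = ((ln 2)^-1 * q)%:E.
  under eq_esum do rewrite mulrC EFinM.
  rewrite esumZ ?Pf // ?invr_ge0 ?(ltW L0) // => i; by rewrite lee_fin pMY_ge0.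
have e2 : \esum_(i in E) (log2 (NY / r) * pMY p w i.1 i.2)%:E = (log2 (NY / r) * q)%:E.
  under eq_esum do rewrite EFinM.
  rewrite esumZ ?Pf // => i; by rewrite lee_fin pMY_ge0.
have c0 : 0 <= r / NY / ln 2.
  by rewrite !divr_ge0 ?(ltW L0) ?(ltW r0) ?(ltW NY0).
have e3 : (\esum_(i in E) (r / NY / ln 2 * pM p i.1)%:E <= (r / NY / ln 2 * NY)%:E)%E.
  under eq_esum do rewrite EFinM.
  rewrite esumZ // ?EFinM; last by move=> i; rewrite lee_fin pM_ge0.
  apply: lee_wpmul2l; first by rewrite lee_fin.
  rewrite -NY_mass; apply: esum_sub => // i; by rewrite lee_fin pM_ge0.
rewrite e1 e2 in h1.
have h2 := le_trans h1 (leeD2l _ e3).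
have Sf : S = (fine S)%:E.
  apply: (@fin_of _ _ (log2 (NY / r) * q + r / NY / ln 2 * NY) S0).
  rewrite EFinD; apply: le_trans h2; apply: leeDl.
  by rewrite lee_fin mulr_ge0 ?invr_ge0 ?(ltW L0) //; case/andP: (Pfin_bnd E).
rewrite Sf -EFinD lee_fin in h2; rewrite Sf lee_fin.
have E3 : r / NY / ln 2 * NY = r / ln 2.
  by rewrite mulrAC divfK // gt_eqF.
rewrite E3 in h2.
rewrite mulrBl (mulrC q) (mulrC _ q) in h2 *.
rewrite (mulrC q) in h2.
lra.
Qed.

Lemma ent_fin : cond_entropy p w = (fine (cond_entropy p w))%:E /\
  0 <= fine (cond_entropy p w) <= log2 NY.
Proof.
have L0 := ln2_gt0 R.
have h := logsum [set: TM * F] ltr01 NY1.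
rewrite -/(cond_entropy p w) (mass hw) /= subrr mul0r addr0 mul1r divr1 in h.
have e0 : (0 <= cond_entropy p w)%E.
  by apply: esum_ge0 => i _; rewrite lee_fin mulr_ge0 ?pMY_ge0 ?cond_info_ge0.
have ef := fin_of e0 h; split => //.
by rewrite -!lee_fin -ef e0 h.
Qed.

End Chan2.

Lemma dom_P (w wt : X -> Y -> R) (eps : R) : is_channel w -> is_channel wt ->
  (forall x y, w x y <= pow2 eps * wt x y) ->
  forall m (y : F), pMY p w m y <= pow2 (n%:R * eps) * pMY p wt m y.
Proof.
move=> hw hwt d m y; rewrite /pMY mulr_sumr; apply: ler_sum => x _.
rewrite mulrCA; apply: (ler_wpM2l (p_ge0 m x)).
have -> : pow2 (n%:R * eps) * chan_n wt x y = \prod_(t < n) (pow2 eps * wt (x t) (y t)).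
  rewrite big_split /= prodr_const card_ord /pow2 -powR_mulrn ?powR_ge0 // -powRrM (mulrC eps).
  done.
by apply: ler_prod => t _; rewrite d andbT; case: hw.
Qed.


Lemma core (w wt : X -> Y -> R) (eps delta alpha t : R) :
  is_channel w -> is_channel wt -> 1 <= NY -> 0 < eps -> 0 < delta ->
  (forall x y, w x y <= pow2 eps * wt x y) ->
  2 <= n%:R * eps ->
  let s := pow2 (- (n%:R * eps)) + pow2 (- (n%:R * (alpha - eps))) in
  s <= 1 ->
  2 * (n%:R * (delta + eps)) + s * (n%:R * (delta + eps) + log2 NY) - 2 * s * log2 s <= t ->
  (prob_dev p wt (n%:R * delta) < (pow2 (- (n%:R * alpha)))%:E)%E ->
  (prob_dev p w t < s%:E)%E.
Proof.
move=> hw hwt NY1 e0 d0 dom ne2 s s1 ht hA.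
have L0 := ln2_gt0 R.
have NY0 : 0 < NY by exact: lt_le_trans ltr01 NY1.
have c0 : 0 < pow2 (n%:R * eps) by apply: powR_gt0.
set c := pow2 (n%:R * eps) in c0 *.
set D := n%:R * (delta + eps) in ht *.
have s0 : 0 < s by apply: addr_gt0; apply: powR_gt0.
have [Hwf Hwb] := ent_fin hw NY1.
have [Htf Htb] := ent_fin hwt NY1.
set H := fine (cond_entropy p w) in Hwf Hwb.
set Ht := fine (cond_entropy p wt) in Htf Htb.
have Pdom := dom_P hw hwt dom.
pose G := [set i : TM * F | 0 < pMY p w i.1 i.2 /\
   `|cond_info p wt i.1 i.2 - Ht| <= n%:R * delta /\
   pMY p wt i.1 i.2 <= c * pMY p w i.1 i.2].
pose E := ~` G.
have qf := Pfin hw E.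
have /andP[q0 q1] := Pfin_bnd hw E.
set q := fine (\esum_(i in E) (pMY p w i.1 i.2)%:E) in qf q0 q1.
pose A := [set my : TM * F | (`| (cond_info p wt my.1 my.2)%:E - cond_entropy p wt| > (n%:R * delta)%:E)%E].
pose B := [set i : TM * F | c * pMY p w i.1 i.2 < pMY p wt i.1 i.2].
pose Z := [set i : TM * F | pMY p w i.1 i.2 = 0].
have sub : E `<=` A `|` B `|` Z.
  move=> i /= notG.
  have [Pp|Pn] := ltP 0 (pMY p w i.1 i.2); last first.
    by right; apply/eqP; rewrite eq_le Pn pMY_ge0.
  have [hle|hgt] := leP `|cond_info p wt i.1 i.2 - Ht| (n%:R * delta); last first.
    by left; left; rewrite /A /= Htf -EFinB abse_EFin lte_fin.
  have [dle|dgt] := leP (pMY p wt i.1 i.2) (c * pMY p w i.1 i.2); last first.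
    by left; right.
  by exfalso; apply: notG.
have Pge0 (ww : X -> Y -> R) : is_channel ww -> forall i : TM * F, (0 <= (pMY p ww i.1 i.2)%:E)%E.
  by move=> hww i; rewrite lee_fin pMY_ge0.
have hq := esum_union3 sub (Pge0 _ hw).
rewrite qf (Pfin hw A) (Pfin hw B) (Pfin hw Z) -!EFinD lee_fin in hq.
have hA' := hA; rewrite /prob_dev (Pfin hwt) lte_fin in hA'.
have aA : fine (\esum_(i in A) (pMY p w i.1 i.2)%:E) <=
          c * fine (\esum_(i in A) (pMY p wt i.1 i.2)%:E).
  rewrite -lee_fin -(Pfin hw A) EFinM -(Pfin hwt A) -esumZ ?(ltW c0) //; last exact: Pge0.
  by apply: le_esum => i _; rewrite -EFinM lee_fin Pdom.
have aB : fine (\esum_(i in B) (pMY p w i.1 i.2)%:E) <= c^-1.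
  rewrite -lee_fin -(Pfin hw B).
  apply: (@le_trans _ _ (\esum_(i in B) (c^-1 * pMY p wt i.1 i.2)%:E)%E).
    apply: le_esum => i; rewrite /B /= => hi; rewrite lee_fin ler_pdivlMl //.
    exact: ltW.
  under eq_esum do rewrite EFinM.
  rewrite esumZ; last exact: Pge0; last by rewrite invr_ge0 ltW.
  rewrite -[X in (_ <= X)%E]mule1; apply: lee_wpmul2l; first by rewrite lee_fin invr_ge0 ltW.
  rewrite -(mass hwt); apply: esum_sub => //; exact: Pge0.
have aZ : fine (\esum_(i in Z) (pMY p w i.1 i.2)%:E) = 0.
  by rewrite esum1 // => i ->.
have cA : c * pow2 (- (n%:R * alpha)) = pow2 (- (n%:R * (alpha - eps))).
  rewrite /c /pow2 -powRD; last by rewrite pnatr_eq0 implybT.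
  congr (_ `^ _); ring.
have cinv : c^-1 = pow2 (- (n%:R * eps)) by rewrite /c /pow2 powRN.
have qs : q < s.
  rewrite /s -cA -cinv.
  have := ltr_pM2l c0; move=> /(_ _ (pow2 (- (n%:R * alpha)))) hh.
  have := hh (fine (\esum_(i in A) (pMY p wt i.1 i.2)%:E)).
  rewrite hA' => /esym hh2.
  lra.

have ptG : forall i, G i -> `|cond_info p w i.1 i.2 - Ht| <= D.
  move=> i [Pp [hle dle]].
  have Ptp : 0 < pMY p wt i.1 i.2.
    rewrite ltNge; apply/negP => hle0; have := Pdom i.1 i.2; rewrite -/c.
    have : c * pMY p wt i.1 i.2 <= 0 by rewrite pmulr_rle0.
    lra.
  have Mp : 0 < pM p i.1 by apply: lt_le_trans Pp (pMY_le hw _ _).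
  have e1 : cond_info p w i.1 i.2 - cond_info p wt i.1 i.2 =
      (ln (pMY p wt i.1 i.2) - ln (pMY p w i.1 i.2)) / ln 2.
    by rewrite /cond_info /log2 !ln_div ?posrE //; field; rewrite gt_eqF.
  have lc : ln c = n%:R * eps * ln 2 by rewrite /c /pow2 ln_powR.
  have l1 : ln (pMY p wt i.1 i.2) <= ln c + ln (pMY p w i.1 i.2).
    by rewrite -lnM ?posrE // ?ler_ln ?posrE ?mulr_gt0.
  have l2 : ln (pMY p w i.1 i.2) <= ln c + ln (pMY p wt i.1 i.2).
    by rewrite -lnM ?posrE // ?ler_ln ?posrE ?mulr_gt0 ?Pdom.
  have hd : `|cond_info p w i.1 i.2 - cond_info p wt i.1 i.2| <= n%:R * eps.
    rewrite lc in l1 l2; rewrite e1 ler_norml; apply/andP; split.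
      rewrite ler_pdivlMr //; lra.
    rewrite ler_pdivrMr //; lra.
  move: hle hd; rewrite /D !ler_norml => /andP[a1 a2] /andP[b1 b2].
  apply/andP; split; lra.
have split1 : 1 = fine (\esum_(i in G) (pMY p w i.1 i.2)%:E) + q.
  have := mass hw; rewrite (esumID G); last by move=> i _; exact: Pge0.
  rewrite !setTI -/E qf (Pfin hw G) -EFinD => /eqP; rewrite eqe => /eqP <-.
  done.
have /andP[g0 g1] := Pfin_bnd hw G.
set gG := fine (\esum_(i in G) (pMY p w i.1 i.2)%:E) in split1 g0 g1.
have hge0 (ww : X -> Y -> R) : is_channel ww -> forall i : TM * F,
    (0 <= (pMY p ww i.1 i.2 * cond_info p ww i.1 i.2)%:E)%E.
  by move=> hww i; rewrite lee_fin mulr_ge0 ?pMY_ge0 ?cond_info_ge0.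
have Hsplit : H%:E = (\esum_(i in G) (pMY p w i.1 i.2 * cond_info p w i.1 i.2)%:E +
                     \esum_(i in E) (pMY p w i.1 i.2 * cond_info p w i.1 i.2)%:E)%E.
  rewrite -Hwf /cond_entropy (esumID G); last by move=> i _; exact: hge0.
  by rewrite !setTI -/E.
have eE := logsum hw NY1 E s0 (le_trans s1 NY1).
rewrite -/q in eE.
have eGu : (\esum_(i in G) (pMY p w i.1 i.2 * cond_info p w i.1 i.2)%:E <= ((Ht + D) * gG)%:E)%E.
  apply: (@le_trans _ _ (\esum_(i in G) ((Ht + D) * pMY p w i.1 i.2)%:E)%E).
    apply: le_esum => i Gi; rewrite lee_fin mulrC ler_wpM2r ?pMY_ge0 //.
    by have := ptG i Gi; rewrite ler_norml => /andP[_]; lra.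
  under eq_esum do rewrite EFinM.
  rewrite esumZ; last exact: Pge0; last by case/andP: Htb => ? _; rewrite addr_ge0 // /D mulr_ge0 // addr_ge0 // ltW.
  by rewrite (Pfin hw G) -EFinM.
have m0 : 0 <= Num.max 0 (Ht - D) by rewrite le_max lexx.
have eGl : (((Num.max 0 (Ht - D)) * gG)%:E <= \esum_(i in G) (pMY p w i.1 i.2 * cond_info p w i.1 i.2)%:E)%E.
  apply: (@le_trans _ _ (\esum_(i in G) (Num.max 0 (Ht - D) * pMY p w i.1 i.2)%:E)%E); last first.
    apply: le_esum => i Gi; rewrite lee_fin mulrC ler_wpM2l ?pMY_ge0 //.
    rewrite ge_max cond_info_ge0 //=.
    by have := ptG i Gi; rewrite ler_norml => /andP[+ _]; lra.
  under eq_esum do rewrite EFinM.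
  rewrite esumZ; last exact: Pge0; last exact: m0.
  by rewrite (Pfin hw G) -EFinM.
have eGf := fin_of (esum_ge0 (fun i _ => hge0 _ hw i)) eGu.
have eEf := fin_of (esum_ge0 (fun i _ => hge0 _ hw i)) eE.
have Hs2 : H = fine (\esum_(i in G) (pMY p w i.1 i.2 * cond_info p w i.1 i.2)%:E) +
              fine (\esum_(i in E) (pMY p w i.1 i.2 * cond_info p w i.1 i.2)%:E).
  by apply: EFin_inj; rewrite EFinD -eGf -eEf.
clear Hsplit.
rewrite eGf in eGu eGl; rewrite eEf in eE.
rewrite !lee_fin in eGu eGl eE.
have eE0 : 0 <= fine (\esum_(i in E) (pMY p w i.1 i.2 * cond_info p w i.1 i.2)%:E).
  by rewrite -lee_fin -eEf; apply: esum_ge0 => i _; exact: hge0.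
set eG := fine (\esum_(i in G) _) in eGu eGl Hs2.
set eE' := fine (\esum_(i in E) _) in eE Hs2 eE0.
have Lb : 0 <= log2 NY by apply: divr_ge0; [exact: ln_ge0|exact: ltW].
have ls0 : log2 s <= 0 by rewrite /log2 pmulr_lle0 ?invr_gt0 ?ln_le0.
have lNs : log2 (NY / s) = log2 NY - log2 s.
  by rewrite /log2 ln_div ?posrE // mulrBl.
have iL : (ln 2)^-1 <= 2 :> R.
  have h2 : 0 < (2 : R)^-1 by rewrite invr_gt0.
  have := ln_le_sub1 h2; rewrite lnV ?posrE // => h3.
  have : 2^-1 <= ln (2 : R) by lra.
  move=> h4; rewrite -(@ler_pM2r _ (ln 2)) // mulVf ?gt_eqF //; lra.
have D2 : 2 <= D.
  have : 0 <= n%:R * delta by rewrite mulr_ge0 // ltW.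
  rewrite /D mulrDr; lra.
have f1 : (Ht + D) * gG <= Ht + D.
  by rewrite ler_piMr // addr_ge0 //; [case/andP: Htb|lra].
have f2 : q * log2 (NY / s) <= s * (log2 NY - log2 s).
  by rewrite lNs ler_wpM2r ?(ltW qs) //; lra.
have f3 : (s - q) / ln 2 <= s * D.
  have : (s - q) * (ln 2)^-1 <= (s - q) * 2 by apply: ler_wpM2l; [lra|exact: iL].
  have : s * 2 <= s * D by apply: ler_wpM2l; [exact: ltW|exact: D2].
  lra.
have ha : H - Ht <= D + s * (log2 NY - log2 s) + s * D.
  rewrite Hs2; have : (Ht + D) * gG <= Ht + D := f1. lra.
have f4 : (Ht - D) * gG <= eG.
  by apply: le_trans eGl; rewrite ler_wpM2r // le_max lexx orbT.
have gq : gG = 1 - q by lra.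
have f5 : (Ht - D) * gG = Ht - D - q * Ht + q * D by rewrite gq; ring.
have f6 : q * Ht <= s * log2 NY.
  by case/andP: Htb => ? ?; rewrite ler_pM // ltW.
have f7 : 0 <= q * D by rewrite mulr_ge0 //; lra.
have hb : Ht - H <= D + s * log2 NY by rewrite Hs2; lra.
have f8 : s * log2 s <= 0 by rewrite mulr_ge0_le0 // ltW.
have fin : forall i, G i -> `|cond_info p w i.1 i.2 - H| <= t.
  move=> i Gi; have := ptG i Gi; rewrite !ler_norml => /andP[a1 a2].
  have f9 : 0 <= s * D by rewrite mulr_ge0 //; lra.
  apply/andP; split; lra.
apply: (@le_lt_trans _ _ q%:E); last by rewrite lte_fin.
rewrite -qf /prob_dev; apply: esum_sub; last exact: Pge0.
move=> i /= hi Gi; have := fin i Gi; move: hi.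
rewrite Hwf -EFinB abse_EFin lte_fin => hi hle.
by have := lt_le_trans hi hle; rewrite ltxx.
Qed.

Lemma prob_le1 (w : X -> Y -> R) t : is_channel w -> (prob_dev p w t <= 1)%E.
Proof.
move=> hw; rewrite -(mass hw); apply: esum_sub => // i.
by rewrite lee_fin pMY_ge0.
Qed.

End Model.


Section Quant.
Variables (R : realType) (X Y : finType).

Definition mk (K : nat) (k : {ffun X * Y -> 'I_K.+1}) : X -> Y -> R :=
  fun x y => ((k (x, y))%:R + 1) / \sum_(y' : Y) ((k (x, y'))%:R + 1).

Lemma mk_sum_ge K (k : {ffun X * Y -> 'I_K.+1}) x :
  (#|Y|%:R : R) <= \sum_(y' : Y) ((k (x, y'))%:R + 1).
Proof.
rewrite -sumr_const; apply: ler_sum => y _; by rewrite lerDr.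
Qed.

Lemma mk_chan K (k : {ffun X * Y -> 'I_K.+1}) : (0 < #|Y|)%N -> is_channel (mk k).
Proof.
move=> Y0; have S0 x : (0 : R) < \sum_(y' : Y) ((k (x, y'))%:R + 1).
  by apply: lt_le_trans (mk_sum_ge k x); rewrite ltr0n.
split => [x y|x].
  by rewrite /mk divr_ge0 // ?addr_ge0 // ltW.
by rewrite /mk -mulr_suml mulfV // gt_eqF.
Qed.

Definition kw (K : nat) (w : X -> Y -> R) : {ffun X * Y -> 'I_K.+1} :=
  [ffun xy => inord (Num.truncn (K%:R * w xy.1 xy.2))].

Lemma kw_dom K (w : X -> Y -> R) (c : R) : is_channel w -> 0 <= c ->
  K%:R + #|Y|%:R <= c * K%:R ->
  forall x y, w x y <= c * mk (kw K w) x y.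
Proof.
move=> hw c0 hK x y.
have w1 := w_le1 hw.
have [w0 ws] := hw.
have kv y' : ((kw K w (x, y'))%:R : R) = (Num.truncn (K%:R * w x y'))%:R.
  rewrite ffunE inordK //; rewrite ltnS -(ler_nat R).
  apply: le_trans (_ : K%:R * w x y' <= K%:R).
    by rewrite truncn_le mulr_ge0.
  by rewrite ler_piMr.
have a_gt y' : K%:R * w x y' < (kw K w (x, y'))%:R + 1.
  by rewrite kv natr1 truncnS_gt.
have a_le y' : ((kw K w (x, y'))%:R : R) <= K%:R * w x y'.
  by rewrite kv truncn_le mulr_ge0.
have S_le : \sum_(y' : Y) (((kw K w (x, y'))%:R : R) + 1) <= K%:R + #|Y|%:R.
  apply: le_trans (_ : \sum_(y' : Y) (K%:R * w x y' + 1) <= _).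
    by apply: ler_sum => y' _; rewrite lerD2r.
  by rewrite big_split /= -mulr_sumr ws mulr1 sumr_const.
have S0 : (0 : R) < \sum_(y' : Y) (((kw K w (x, y'))%:R : R) + 1).
  rewrite (bigD1 y) //=.
  have : 0 <= \sum_(i | i != y) (((kw K w (x, i))%:R : R) + 1).
    by apply: sumr_ge0 => i _; rewrite addr_ge0 ?ler0n.
  have : (0 : R) <= (kw K w (x, y))%:R by rewrite ler0n.
  lra.
rewrite /mk mulrA ler_pdivlMr //.
apply: (le_trans (ler_wpM2l (w0 x y) S_le)).
apply: (le_trans (ler_wpM2l (w0 x y) hK)).
rewrite mulrCA; apply: (ler_wpM2l c0).
by rewrite mulrC; exact: ltW (a_gt y).
Qed.

End Quant.

Lemma ln2_ge_half (R : realType) : 2^-1 <= ln (2 : R).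
Proof.
have h2 : 0 < (2 : R)^-1 by rewrite invr_gt0.
have := ln_le_sub1 h2; rewrite lnV ?posrE // => h3; lra.
Qed.

Lemma pow2_ge (R : realType) (e : R) : 1 + e * ln 2 <= pow2 e.
Proof. by rewrite /pow2 /powR pnatr_eq0 /= expR_ge1Dx. Qed.

Lemma floor_trunc (R : realType) (x : R) : 0 <= x -> ((Num.floor x)%:~R : R) = (Num.truncn x)%:R.
Proof. by move=> x0; rewrite truncn_floor x0 natr_absz ger0_norm // floor_ge0. Qed.

Lemma K_ok (R : realType) (Yc eps : R) : 2 <= Yc -> 0 < eps -> eps < 1 ->
  (Num.truncn (4 * Yc ^+ 2 / eps))%:R + Yc <= pow2 eps * (Num.truncn (4 * Yc ^+ 2 / eps))%:R.
Proof.
move=> Y2 e0 e1.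
set K : R := (Num.truncn _)%:R.
have hK : 4 * Yc ^+ 2 / eps < K + 1 by rewrite /K natr1 truncnS_gt.
rewrite ltr_pdivrMr // in hK.
have K0 : 0 <= K by rewrite /K ler0n.
have hp := pow2_ge eps.
have hl := ln2_ge_half R.
have h1 : eps * 2^-1 <= eps * ln 2 by rewrite ler_pM2l.
have h2 : (1 + eps * 2^-1) * K <= pow2 eps * K by rewrite ler_wpM2r //; lra.
have h3 : 8 * Yc <= 4 * Yc ^+ 2 by rewrite expr2; nra.
have h4 : eps * K <= K by rewrite ler_piMl // ltW.
lra.
Qed.

Unset Implicit Arguments.

Theorem theorem13 (R : realType) (X Y : finType) (n : nat) (eps : R) :
  (27 <= n)%N -> (2 <= #|X|)%N -> (2 <= #|Y|)%N ->
  (4 * #|X|%:R * #|Y|%:R / n%:R) * log2 n%:R < eps -> eps < 1 ->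
  exists Pt : seq (X -> Y -> R),
    (forall wt, wt \in Pt -> is_channel wt) /\
    ((size Pt)%:R : R) <= (#|Y|%:R * (1 + ((Num.floor (4 * #|Y|%:R ^+ 2 / eps : R))%:~R : R)))
                      ^+ (#|X| * #|Y|) /\
    forall (TM : countType) (p : TM -> {ffun 'I_n -> X} -> R),
      is_joint_pmf p ->
      forall w : X -> Y -> R, is_channel w ->
        exists2 wt, wt \in Pt &
          forall delta alpha : R, 0 < delta -> 0 < alpha ->
            (prob_dev p wt (n%:R * delta) < (pow2 (- (n%:R * alpha)))%:E)%E ->
            let s := pow2 (- (n%:R * eps)) + pow2 (- (n%:R * (alpha - eps))) in
            let dt := (2 + s) * (delta + eps)
                      + s * (log2 #|Y|%:R - 2 / n%:R * log2 s) in
            (prob_dev p w (n%:R * dt) < s%:E)%E.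
Proof.
move=> n27 X2 Y2 heps eps1.
have n0 : (0 : R) < n%:R by rewrite ltr0n; apply: leq_trans n27.
have Yc2 : (2 : R) <= #|Y|%:R by rewrite ler_nat.
have Xc2 : (2 : R) <= #|X|%:R by rewrite ler_nat.
have L0 := ln2_gt0 R.
have logn : 1 <= log2 (n%:R : R).
  rewrite /log2 ler_pdivlMr // mul1r ler_ln ?posrE // ?ler_nat //.
  by apply: leq_trans n27.
have hxy : 4 <= #|X|%:R * (#|Y|%:R : R) by nra.
rewrite mulrAC ltr_pdivrMr // in heps.
have h4 : #|X|%:R * #|Y|%:R * 1 <= #|X|%:R * (#|Y|%:R : R) * log2 n%:R.
  by rewrite ler_wpM2l // mulr_ge0 ?ler0n.
have e0 : 0 < eps by nra.
have ne : 2 <= n%:R * eps by nra.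
set K := Num.truncn (4 * (#|Y|%:R : R) ^+ 2 / eps).
exists [seq @mk R X Y K k | k <- enum {ffun X * Y -> 'I_K.+1}].
have Y0 : (0 < #|Y|)%N by apply: leq_trans Y2.
split; first by move=> wt /mapP [k _ ->]; exact: mk_chan.
split.
  rewrite size_map -cardE card_ffun card_prod card_ord natrX floor_trunc; last first.
    by apply: divr_ge0; [rewrite mulr_ge0 // exprn_ge0 // ler0n | exact: ltW].
  rewrite -/K; apply: lerXn2r; rewrite ?nnegrE ?ler0n // ?mulr_ge0 ?addr_ge0 ?ler0n //.
  rewrite -natr1; have : (0 : R) <= K%:R by rewrite ler0n.
  nra.
move=> TM p hp w hw.
exists (@mk R X Y K (kw K w)); first by apply: map_f; rewrite mem_enum.
move=> delta alpha d0 a0 hA; cbv zeta.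
set s := pow2 (- (n%:R * eps)) + pow2 (- (n%:R * (alpha - eps))).
have NY1 : 1 <= NY R Y n by rewrite /NY card_ffun card_ord ler1n expn_gt0 Y0.
have [s1|s1] := leP s 1; last first.
  by apply: le_lt_trans (prob_le1 hp _ hw) _; rewrite lte_fin.
apply: (core hp hw (mk_chan R (kw K w) Y0) NY1 e0 d0 _ ne s1 _ hA).
  apply: kw_dom => //; first exact: ltW (powR_gt0 _ _).
  exact: K_ok.
have lNY : log2 (NY R Y n) = n%:R * log2 (#|Y|%:R : R).
  rewrite /NY card_ffun card_ord natrX /log2 lnXn; last by rewrite ltr0n.
  by rewrite -[ln _ *+ n]mulr_natl mulrA.
rewrite lNY le_eqVlt; apply/orP; left; apply/eqP.
rewrite -/s; clearbody s; field; rewrite gt_eqF //.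
Qed.
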